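(* Let $R$ be a nonzero ring and $*\in\{l,r,\emptyset\}$. Then the set $\mathbb{L}_*(R)$ has maximal elements with respect to inclusion, i.e. $\max\mathbb{L}_*(R)\neq\emptyset$.
   Context: Rings are associative with $1$. A multiplicative set $S\subseteq R$: $SS\subseteq S$, $1\in S$, $0\notin S$. $R\langle S^{-1}\rangle=R\langle X_S\rangle/I_S$, where $R\langle X_S\rangle$ is freely generated by $R$ and noncommuting indeterminates $x_s$ ($s\in S$) and $I_S$ is generated by $sx_s-1,x_ss-1$. $S$ is left localizable if $R\langle S^{-1}\rangle\ne0$ and every element is of the form $(x_s+I_S)(r+I_S)$; right localizable if $R\langle S^{-1}\rangle\ne0$ and every element is of the form $(r+I_S)(x_s+I_S)$ ($s\in S,r\in R$); localizable if both. $\mathbb{L}_l(R)$, $\mathbb{L}_r(R)$, $\mathbb{L}_\emptyset(R)$ are the sets of left localizable, right localizable, localizable sets. *)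

(* Defs.v *)
From mathcomp Require Import all_boot all_algebra.
Set Implicit Arguments. Unset Strict Implicit. Unset Printing Implicit Defensive.
Import GRing.Theory.
Local Open Scope ring_scope.

Definition mult_set (R : nzRingType) (S : R -> Prop) : Prop :=
  [/\ forall a b, S a -> S b -> S (a * b), S 1 & ~ S 0].

(* Terms of the ring R<X_S> freely generated by R and noncommuting
   indeterminates x_s (s ∈ S). *)
Inductive lexpr (R : nzRingType) (S : R -> Prop) : Type :=
| LConst of R
| LVar of {s : R | S s}
| LZero | LOne
| LAdd of lexpr S & lexpr S
| LNeg of lexpr S
| LMul of lexpr S & lexpr S.

Arguments LZero {R S}. Arguments LOne {R S}.

(* The congruence presenting R<S^{-1}> = R<X_S>/I_S : ring axioms, the ring
   structure of R (constants), and the relations s x_s = 1, x_s s = 1. *)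
Inductive leq_rel (R : nzRingType) (S : R -> Prop) : lexpr S -> lexpr S -> Prop :=
| lr_refl e : leq_rel e e
| lr_sym e f : leq_rel e f -> leq_rel f e
| lr_trans e f g : leq_rel e f -> leq_rel f g -> leq_rel e g
| lr_add e e' f f' : leq_rel e e' -> leq_rel f f' -> leq_rel (LAdd e f) (LAdd e' f')
| lr_neg e e' : leq_rel e e' -> leq_rel (LNeg e) (LNeg e')
| lr_mul e e' f f' : leq_rel e e' -> leq_rel f f' -> leq_rel (LMul e f) (LMul e' f')
| lr_addA e f g : leq_rel (LAdd e (LAdd f g)) (LAdd (LAdd e f) g)
| lr_addC e f : leq_rel (LAdd e f) (LAdd f e)
| lr_add0 e : leq_rel (LAdd LZero e) e
| lr_addN e : leq_rel (LAdd (LNeg e) e) LZero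
| lr_mulA e f g : leq_rel (LMul e (LMul f g)) (LMul (LMul e f) g)
| lr_mul1l e : leq_rel (LMul LOne e) e
| lr_mul1r e : leq_rel (LMul e LOne) e
| lr_mulDl e f g : leq_rel (LMul (LAdd e f) g) (LAdd (LMul e g) (LMul f g))
| lr_mulDr e f g : leq_rel (LMul e (LAdd f g)) (LAdd (LMul e f) (LMul e g))
| lr_cadd a b : leq_rel (LConst S (a + b)) (LAdd (LConst S a) (LConst S b))
| lr_cneg a : leq_rel (LConst S (- a)) (LNeg (LConst S a))
| lr_cmul a b : leq_rel (LConst S (a * b)) (LMul (LConst S a) (LConst S b))
| lr_c0 : leq_rel (LConst S 0) LZero
| lr_c1 : leq_rel (LConst S 1) LOne
| lr_invr (s : {s : R | S s}) : leq_rel (LMul (LConst S (sval s)) (LVar s)) LOne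
| lr_invl (s : {s : R | S s}) : leq_rel (LMul (LVar s) (LConst S (sval s))) LOne.

Definition loc_nonzero (R : nzRingType) (S : R -> Prop) : Prop :=
  ~ leq_rel (@LOne R S) LZero.

Definition left_localizable (R : nzRingType) (S : R -> Prop) : Prop :=
  mult_set S /\ loc_nonzero S /\
  forall e : lexpr S, exists (s : {s : R | S s}) (r : R),
    leq_rel e (LMul (LVar s) (LConst S r)).

Definition right_localizable (R : nzRingType) (S : R -> Prop) : Prop :=
  mult_set S /\ loc_nonzero S /\
  forall e : lexpr S, exists (s : {s : R | S s}) (r : R),
    leq_rel e (LMul (LConst S r) (LVar s)).

Inductive loc_kind := LK_left | LK_right | LK_both.

Definition localizable_of (k : loc_kind) (R : nzRingType) (S : R -> Prop) : Prop :=
  match k with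
  | LK_left => left_localizable S
  | LK_right => right_localizable S
  | LK_both => left_localizable S /\ right_localizable S
  end.

(* Main.v *)
Require Import Defs.
From mathcomp Require Import all_boot all_algebra.
From Stdlib Require Import ClassicalDescription ProofIrrelevance.
Set Implicit Arguments. Unset Strict Implicit.
Import GRing.Theory.
Local Open Scope ring_scope.

Section Core.
Variable R : nzRingType.

Fixpoint lift (S T : R -> Prop) (h : forall x, S x -> T x) (e : lexpr S) : lexpr T :=
  match e with
  | LConst a => LConst T a
  | LVar s => LVar (exist T (sval s) (h _ (svalP s)))
  | LZero => LZero
  | LOne => LOne
  | LAdd a b => LAdd (lift h a) (lift h b)
  | LNeg a => LNeg (lift h a)
  | LMul a b => LMul (lift h a) (lift h b)
  end.

Fixpoint restr (S T : R -> Prop) (e : lexpr S) : lexpr T :=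
  match e with
  | LConst a => LConst T a
  | LVar s => match excluded_middle_informative (T (sval s)) with
              | left q => LVar (exist T (sval s) q)
              | right _ => LZero end
  | LZero => LZero
  | LOne => LOne
  | LAdd a b => LAdd (restr T a) (restr T b)
  | LNeg a => LNeg (restr T a)
  | LMul a b => LMul (restr T a) (restr T b)
  end.

Lemma lift_rel S T (h : forall x, S x -> T x) e f :
  leq_rel e f -> leq_rel (lift h e) (lift h f).
Proof.
elim=> /=; try by intros; econstructor; eauto.
- move=> s; exact: (lr_invr (exist T (sval s) (h _ (svalP s)))).
- move=> s; exact: (lr_invl (exist T (sval s) (h _ (svalP s)))).
Qed.

Variables (F : (R -> Prop) -> Prop) (U : R -> Prop).
Hypothesis Fne : exists X, F X.
Hypothesis Fch : forall X Y, F X -> F Y -> (forall x, X x -> Y x) \/ (forall x, Y x -> X x).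
Hypothesis HU : forall x, U x <-> exists2 X, F X & X x.

Lemma subU Y : F Y -> forall x, Y x -> U x.
Proof. by move=> FY x Yx; apply/HU; exists Y. Qed.

Definition good (P : (R -> Prop) -> Prop) :=
  exists X, F X /\ forall Y, F Y -> (forall x, X x -> Y x) -> P Y.

Lemma good_and P Q : good P -> good Q -> good (fun Y => P Y /\ Q Y).
Proof.
move=> [X1 [F1 H1]] [X2 [F2 H2]].
case: (Fch F1 F2) => s.
- exists X2; split=> // Y FY sY; split; [apply: H1 | apply: H2] => // x /s; auto.
- exists X1; split=> // Y FY sY; split; [apply: H1 | apply: H2] => // x; auto.
Qed.

Lemma good_triv P : (forall Y, P Y) -> good P.
Proof. case: Fne => X FX h; exists X; split=> //. Qed.

Lemma good_mono P Q : (forall Y, P Y -> Q Y) -> good P -> good Q.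
Proof. move=> h [X [FX H]]; exists X; split=> // Y FY sY; apply: h; auto. Qed.

Lemma good_var x : U x -> good (fun Y => Y x).
Proof. move/HU=> [X FX Xx]; exists X; split=> // Y _; auto. Qed.

Lemma restr_rel (e f : lexpr U) : leq_rel e f ->
  good (fun Y => leq_rel (restr Y e) (restr Y f)).
Proof.
elim=> /=; try by intros; apply: good_triv=> Y; econstructor.
- by move=> ? ? _ h; apply: good_mono h=> Y; apply: lr_sym.
- move=> ? ? ? _ h1 _ h2; apply: good_mono (good_and h1 h2)=> Y [] ; apply: lr_trans.
- move=> ? ? ? ? _ h1 _ h2; apply: good_mono (good_and h1 h2)=> Y []; apply: lr_add.
- by move=> ? ? _ h; apply: good_mono h=> Y; apply: lr_neg.
- move=> ? ? ? ? _ h1 _ h2; apply: good_mono (good_and h1 h2)=> Y []; apply: lr_mul.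
- move=> s; apply: good_mono (good_var (svalP s)) => Y Ys.
  case: excluded_middle_informative => // q.
  exact: (lr_invr (exist Y (sval s) q)).
- move=> s; apply: good_mono (good_var (svalP s)) => Y Ys.
  case: excluded_middle_informative => // q.
  exact: (lr_invl (exist Y (sval s) q)).
Qed.

Lemma restr_lift (e : lexpr U) :
  good (fun Y => forall FY : F Y, e = lift (subU FY) (restr Y e)).
Proof.
elim: e => /=; try by intros; apply: good_triv.
- move=> [x p] /=; apply: good_mono (good_var p) => Y Yx FY.
  case: excluded_middle_informative => // q /=.
  by congr LVar; congr exist; apply: proof_irrelevance.
- move=> a ha b hb; apply: good_mono (good_and ha hb) => Y [h1 h2] FY.
  by rewrite -h1 -h2.
- move=> a ha; apply: good_mono ha => Y h1 FY. by rewrite -h1.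
- move=> a ha b hb; apply: good_mono (good_and ha hb) => Y [h1 h2] FY.
  by rewrite -h1 -h2.
Qed.

Lemma union_mult : (forall X, F X -> mult_set X) -> mult_set U.
Proof.
move=> hm; split.
- move=> a b /HU[Xa Fa Xaa] /HU[Xb Fb Xbb]; apply/HU.
  case: (Fch Fa Fb) => s.
  + exists Xb => //; case: (hm _ Fb) => m _ _; apply: m; auto.
  + exists Xa => //; case: (hm _ Fa) => m _ _; apply: m; auto.
- case: Fne => X FX; apply/HU; exists X => //; by case: (hm _ FX).
- by move=> /HU[X FX X0]; case: (hm _ FX) => _ _; apply.
Qed.

Lemma union_nz : (forall X, F X -> loc_nonzero X) -> loc_nonzero U.
Proof.
move=> hn h; case: (restr_rel h) => X [FX HX].
exact: (hn _ FX (HX X FX (fun x p => p))).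
Qed.

Lemma union_left : (forall X, F X -> left_localizable X) -> left_localizable U.
Proof.
move=> hl; split; first by apply: union_mult => X /hl[].
split; first by apply: union_nz => X /hl[] _ [].
move=> e; case: (restr_lift e) => X [FX HX].
case: (hl _ FX) => _ [_ /(_ (restr X e))[s [r hr]]].
exists (exist U (sval s) (subU FX (svalP s))), r.
rewrite (HX X FX (fun x p => p) FX).
exact: (lift_rel (subU FX) hr).
Qed.

Lemma union_right : (forall X, F X -> right_localizable X) -> right_localizable U.
Proof.
move=> hl; split; first by apply: union_mult => X /hl[].
split; first by apply: union_nz => X /hl[] _ [].
move=> e; case: (restr_lift e) => X [FX HX].
case: (hl _ FX) => _ [_ /(_ (restr X e))[s [r hr]]].
exists (exist U (sval s) (subU FX (svalP s))), r.
rewrite (HX X FX (fun x p => p) FX).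
exact: (lift_rel (subU FX) hr).
Qed.

End Core.
Section One.
Variable R : nzRingType.
Definition S1 : R -> Prop := fun x => x = 1.

Fixpoint ev (e : lexpr S1) : R :=
  match e with
  | LConst a => a
  | LVar _ => 1
  | LZero => 0
  | LOne => 1
  | LAdd a b => ev a + ev b
  | LNeg a => - ev a
  | LMul a b => ev a * ev b
  end.

Lemma ev_rel e f : leq_rel e f -> ev e = ev f.
Proof.
elim=> //= *; try congruence.
- by rewrite addrA.
- by rewrite addrC.
- by rewrite add0r.
- by rewrite addNr.
- by rewrite mulrA.
- by rewrite mul1r.
- by rewrite mulr1.
- by rewrite mulrDl.
- by rewrite mulrDr.
- match goal with s : {s | S1 s} |- _ => case: s => x /= -> end; by rewrite mulr1.
- match goal with s : {s | S1 s} |- _ => case: s => x /= -> end; by rewrite mulr1.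
Qed.

Lemma S1_nz : loc_nonzero S1.
Proof. by move/ev_rel => /= /eqP; rewrite oner_eq0. Qed.

Lemma S1_mult : mult_set S1.
Proof. split; rewrite /S1. by move=> a b -> ->; rewrite mulr1. by []. by move/eqP; rewrite eq_sym oner_eq0. Qed.

Definition one1 : {s | S1 s} := exist S1 1 erefl.

Lemma ev_const e : leq_rel e (LConst S1 (ev e)).
Proof.
elim: e => /=.
- by move=> a; apply: lr_refl.
- move=> [x p]; have E : x = 1 := p; subst x => /=.
  set v := exist _ 1 p.
  eapply lr_trans; first exact: (lr_sym (lr_mul1l (LVar v))).
  eapply lr_trans; first exact: (lr_mul (lr_sym (lr_c1 _)) (lr_refl (LVar v))).
  eapply lr_trans; first exact: (lr_invr v).
  exact: lr_sym (lr_c1 _).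
- exact: lr_sym (lr_c0 _).
- exact: lr_sym (lr_c1 _).
- move=> a ha b hb; apply: lr_trans (lr_sym (lr_cadd _ _ _)); exact: lr_add.
- move=> a ha; apply: lr_trans (lr_sym (lr_cneg _ _)); exact: lr_neg.
- move=> a ha b hb; apply: lr_trans (lr_sym (lr_cmul _ _ _)); exact: lr_mul.
Qed.

Lemma S1_left : left_localizable S1.
Proof.
split; first exact: S1_mult. split; first exact: S1_nz.
move=> e; exists one1, (ev e).
apply: lr_trans (ev_const e) _.
apply: lr_trans (lr_sym (lr_mul1l _)) _.
apply: lr_trans (lr_mul (lr_sym (lr_invl one1)) (lr_refl _)) _.
apply: lr_trans (lr_sym (lr_mulA _ _ _)) _.
apply: lr_mul; first exact: lr_refl.
apply: lr_trans (lr_sym (lr_cmul _ _ _)) _ => /=.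
rewrite mul1r; exact: lr_refl.
Qed.

Lemma S1_right : right_localizable S1.
Proof.
split; first exact: S1_mult. split; first exact: S1_nz.
move=> e; exists one1, (ev e).
apply: lr_trans (ev_const e) _.
apply: lr_trans (lr_sym (lr_mul1r _)) _.
apply: lr_trans (lr_mul (lr_refl _) (lr_sym (lr_invr one1))) _.
apply: lr_trans (lr_mulA _ _ _) _.
apply: lr_mul; last exact: lr_refl.
apply: lr_trans (lr_sym (lr_cmul _ _ _)) _ => /=.
rewrite mulr1; exact: lr_refl.
Qed.
End One.

From mathcomp Require Import classical_sets.
From Stdlib Require Import Classical.

Lemma S1_loc (R : nzRingType) k : localizable_of k (@S1 R).
Proof. case: k => /=; by [apply: S1_left | apply: S1_right | split; [apply: S1_left | apply: S1_right]]. Qed.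

Lemma union_loc (R : nzRingType) k (F : (R -> Prop) -> Prop) (U : R -> Prop) :
  (exists X, F X) ->
  (forall X Y, F X -> F Y -> (forall x, X x -> Y x) \/ (forall x, Y x -> X x)) ->
  (forall x, U x <-> exists2 X, F X & X x) ->
  (forall X, F X -> localizable_of k X) -> localizable_of k U.
Proof.
move=> Fne Fch HU hl; case: k hl => /= hl.
- exact: (union_left Fne Fch HU hl).
- exact: (union_right Fne Fch HU hl).
- split; [apply: (union_left Fne Fch HU) | apply: (union_right Fne Fch HU)] => X /hl[] //.
Qed.

Theorem theorem1p9 (R : nzRingType) (k : loc_kind) :
  exists S : R -> Prop,
    localizable_of k S /\
    (forall T : R -> Prop, localizable_of k T ->
       (forall x, S x -> T x) -> forall x, T x -> S x).
Proof.
pose P (X : R -> Prop) := (forall x, ~ X x) \/ localizable_of k X.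
have [|A [PA Amax]] := @Zorn_bigcup R P.
  move=> F FP Ftot.
  pose F' X := F X /\ exists x, X x.
  case: (classic (exists X, F' X)) => [Fne|Fe]; last first.
    rewrite /P; left=> x [X FX Xx]; apply: Fe; exists X; split=> //; by exists x.
  rewrite /P; right; apply: (union_loc (F := F')) => //.
  - move=> X Y [FX _] [FY _]; exact: Ftot.
  - move=> x; split.
    + move=> [X FX Xx]; exists X => //; split=> //; by exists x.
    + move=> [X [FX _] Xx]; by exists X.
  - move=> X [FX [x Xx]]; case: (FP X FX) => // h; by case: (h x).
have Aloc : localizable_of k A.
  case: PA => // h; exfalso; apply: (Amax (@S1 R)); last by right; apply: S1_loc.
  split; first by move=> x /h.
  by move=> /(_ 1 erefl) /h.
exists A; split=> // T hT sAT x Tx.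
apply: NNPP => nAx; apply: (Amax T); last by right.
split=> //; by move=> /(_ x Tx).
Qed.
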